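(* Let $n\ge 2$. The subgroup of $(n-2)$-decomposable braids in $P_n$, namely $\bigcap_{S\subseteq N,\ |S|=n-2} Q_S$, equals the commutator subgroup $[P_n,P_n]$ of $P_n$.
   Context: $P_n$ denotes the pure braid group on $n$ strands, generated by elements $p_{a,b}$ for $1\le a<b\le n$ subject to the relations: (A) $p_{a,b}p_{a,c}p_{b,c}=p_{a,c}p_{b,c}p_{a,b}=p_{b,c}p_{a,b}p_{a,c}$ for $1\le a<b<c\le n$; (B) $p_{a,b}p_{c,d}=p_{c,d}p_{a,b}$ and $p_{a,d}p_{b,c}=p_{b,c}p_{a,d}$ for $1\le a<b<c<d\le n$; (C) $p_{a,c}p_{b,c}^{-1}p_{b,d}p_{b,c}=p_{b,c}^{-1}p_{b,d}p_{b,c}p_{a,c}$ for $1\le a<b<c<d\le n$. Let $N=\{1,\dots,n\}$. For $S\subseteq N$, $Q_S$ is the subgroup generated by the $p_{a,b}$ with $a\in S$ or $b\in S$ (with $Q_\emptyset$ trivial). A braid is $k$-decomposable if it lies in $Q_S$ for every $S\subseteq N$ with $|S|=k$. *)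

(* Defs.v *)
From mathcomp Require Import all_boot.
Set Implicit Arguments. Unset Strict Implicit. Unset Printing Implicit Defensive.

(* Strands are labelled by 'I_n = {0,...,n-1} (shift of {1,...,n}).
   A letter (a, b, e) stands for p_{a,b} if e = false and p_{a,b}^-1 if e = true. *)
Definition letter (n : nat) := ('I_n * 'I_n * bool)%type.
Definition word (n : nat) := seq (letter n).

Definition linv n (x : letter n) : letter n := (x.1.1, x.1.2, ~~ x.2).
Definition winv n (w : word n) : word n := rev (map (@linv n) w).

Definition pg n (a b : 'I_n) : letter n := (a, b, false).
Definition pgi n (a b : 'I_n) : letter n := (a, b, true).

Definition valid_letter n (x : letter n) : bool := x.1.1 < x.1.2.
Definition valid_word n (w : word n) : bool := all (@valid_letter n) w.

(* The congruence on words generated by free cancellation and the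
   defining relations (A), (B), (C) of P_n. *)
Inductive peq (n : nat) : word n -> word n -> Prop :=
| peq_refl w : peq w w
| peq_sym u v : peq u v -> peq v u
| peq_trans u v w : peq u v -> peq v w -> peq u w
| peq_cat u1 u2 v1 v2 : peq u1 u2 -> peq v1 v2 -> peq (u1 ++ v1) (u2 ++ v2)
| peq_cancel x : peq [:: x; linv x] [::]
| peq_A1 (a b c : 'I_n) : a < b -> b < c ->
    peq [:: pg a b; pg a c; pg b c] [:: pg a c; pg b c; pg a b]
| peq_A2 (a b c : 'I_n) : a < b -> b < c ->
    peq [:: pg a c; pg b c; pg a b] [:: pg b c; pg a b; pg a c]
| peq_B1 (a b c d : 'I_n) : a < b -> b < c -> c < d ->
    peq [:: pg a b; pg c d] [:: pg c d; pg a b]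
| peq_B2 (a b c d : 'I_n) : a < b -> b < c -> c < d ->
    peq [:: pg a d; pg b c] [:: pg b c; pg a d]
| peq_C (a b c d : 'I_n) : a < b -> b < c -> c < d ->
    peq [:: pg a c; pgi b c; pg b d; pg b c] [:: pgi b c; pg b d; pg b c; pg a c].

Definition inQ n (S : {set 'I_n}) (w : word n) : Prop :=
  exists w' : word n,
    all (fun x => valid_letter x && ((x.1.1 \in S) || (x.1.2 \in S))) w' /\ peq w w'.

Definition commw n (uv : word n * word n) : word n :=
  uv.1 ++ uv.2 ++ winv uv.1 ++ winv uv.2.

(* membership in [P_n, P_n]: w equals a product of commutators [u,v]
   (the inverse of [u,v] is literally the word [v,u], so these products
   form the subgroup generated by commutators) *)
Definition inComm n (w : word n) : Prop :=
  exists s : seq (word n * word n),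
    all (fun uv => valid_word uv.1 && valid_word uv.2) s /\
    peq w (flatten (map (@commw n) s)).

Definition decomposable n (k : nat) (w : word n) : Prop :=
  forall S : {set 'I_n}, #|S| = k -> inQ S w.

(* Main.v *)
Require Import Defs.
From mathcomp Require Import all_boot zify.
Set Implicit Arguments. Unset Strict Implicit. Unset Printing Implicit Defensive.

Section Inf.
Variable n : nat.
Implicit Types (u v w s t : word n) (x : letter n).

Lemma linvK : cancel (@linv n) (@linv n).
Proof. by case=> [[a b] e]; rewrite /linv /= negbK. Qed.

Lemma peq_catl s u v : peq u v -> peq (s ++ u) (s ++ v).
Proof. by move=> h; apply: peq_cat => //; apply: peq_refl. Qed.
Lemma peq_catr t u v : peq u v -> peq (u ++ t) (v ++ t).
Proof. by move=> h; apply: peq_cat => //; apply: peq_refl. Qed.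

Lemma peq_at k m L v : peq (take m (drop k L)) v -> peq L (take k L ++ v ++ drop (k+m) L).
Proof.
move=> h. rewrite -{1}(cat_take_drop k L) -{1}(cat_take_drop m (drop k L)).
rewrite drop_drop addnC. apply: peq_catl. exact: peq_catr.
Qed.

Lemma peq_ins k L x : peq L (take k L ++ [:: x; linv x] ++ drop k L).
Proof.
rewrite -{1}(cat_take_drop k L). apply: peq_catl.
apply: (@peq_catr _ [::]). apply: peq_sym; apply: peq_cancel.
Qed.

Lemma winv_cat u v : winv (u ++ v) = winv v ++ winv u.
Proof. by rewrite /winv map_cat rev_cat. Qed.
Lemma winv_cons x u : winv (x :: u) = winv u ++ [:: linv x].
Proof. by rewrite /winv /= rev_cons -cats1. Qed.
Lemma winvK u : winv (winv u) = u.
Proof. by rewrite /winv map_rev revK -map_comp (eq_map linvK) map_id. Qed.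

Lemma cancw u : peq (u ++ winv u) [::].
Proof.
elim: u => [|x u IH] /=; first exact: peq_refl.
rewrite winv_cons. apply: (@peq_trans _ _ (x :: (u ++ winv u) ++ [:: linv x])).
  by rewrite -catA; apply: peq_refl.
apply: (@peq_trans _ _ ([:: x] ++ [::] ++ [:: linv x])).
  apply: (peq_catl [:: x]). exact: peq_catr.
exact: peq_cancel.
Qed.

Lemma cancw' u : peq (winv u ++ u) [::].
Proof. by have := cancw (winv u); rewrite winvK. Qed.

Lemma peq_winv u v : peq u v -> peq (winv u) (winv v).
Proof.
move=> h.
apply: (@peq_trans _ _ (winv u ++ (v ++ winv v))).
  rewrite -{1}(cats0 (winv u)). apply: peq_catl. apply: peq_sym. exact: cancw.
apply: (@peq_trans _ _ (winv u ++ (u ++ winv v))).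
  apply: peq_catl. apply: peq_catr. exact: peq_sym.
rewrite catA -{2}(cat0s (winv v)). apply: peq_catr. exact: cancw'.
Qed.
End Inf.

Ltac rwat k m H := eapply peq_trans; [ apply: (@peq_at _ k m); exact H | rewrite /= ].
Ltac ins k x := eapply peq_trans; [ apply: (@peq_ins _ k _ x) | rewrite /= ].
Ltac cn k := eapply peq_trans; [ apply: (@peq_at _ k 2); apply: peq_cancel | rewrite /= ].
Ltac fin := apply: peq_refl.

Section Tri.
Variable n : nat.
Variables a1 b1 a2 b2 a3 b3 : 'I_n.
Lemma tri :
  peq [:: pg a1 b1; pg a2 b2; pg a3 b3] [:: pg a2 b2; pg a3 b3; pg a1 b1] ->
  peq [:: pg a2 b2; pg a3 b3; pg a1 b1] [:: pg a3 b3; pg a1 b1; pg a2 b2] ->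
  [/\ peq [:: pg a1 b1; pg a2 b2; pgi a1 b1] [:: pgi a3 b3; pg a2 b2; pg a3 b3],
      peq [:: pg a1 b1; pg a3 b3; pgi a1 b1] [:: pgi a3 b3; pgi a2 b2; pg a3 b3; pg a2 b2; pg a3 b3],
      peq [:: pgi a1 b1; pg a2 b2; pg a1 b1] [:: pg a2 b2; pg a3 b3; pg a2 b2; pgi a3 b3; pgi a2 b2] &
      peq [:: pgi a1 b1; pg a3 b3; pg a1 b1] [:: pg a2 b2; pg a3 b3; pgi a2 b2]].
Proof.
move=> R1 R2. have R3 := peq_trans R1 R2.
have I1 : peq [:: pg a1 b1; pg a2 b2; pgi a1 b1] [:: pgi a3 b3; pg a2 b2; pg a3 b3].
  ins 0 (pgi a3 b3). rwat 1 3 (peq_sym R2). cn 3. fin.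
have I4 : peq [:: pgi a1 b1; pg a3 b3; pg a1 b1] [:: pg a2 b2; pg a3 b3; pgi a2 b2].
  ins 3 (pg a2 b2). rwat 1 3 (peq_sym R3). cn 0. fin.
split => //.
- have I1' : peq [:: pg a1 b1; pgi a2 b2; pgi a1 b1] [:: pgi a3 b3; pgi a2 b2; pg a3 b3] := peq_winv I1.
  ins 1 (pgi a2 b2). ins 2 (pgi a1 b1). rwat 3 3 R1. cn 5. rwat 0 3 I1'. fin.
- have I4' : peq [:: pgi a1 b1; pgi a3 b3; pg a1 b1] [:: pg a2 b2; pgi a3 b3; pgi a2 b2] := peq_winv I4.
  ins 2 (pg a3 b3). ins 3 (pg a1 b1). rwat 1 3 (peq_sym R1). cn 0. rwat 2 3 I4'. fin.
Qed.
End Tri.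
Section Tri3.
Variable n : nat.
Variables x y z : 'I_n.
Hypotheses (hxy : x < y) (hyz : y < z).
Let A1 := peq_A1 hxy hyz.
Let A2 := peq_A2 hxy hyz.
Definition triA := tri A1 A2.
Definition triB := tri A2 (peq_sym (peq_trans A1 A2)).
Definition triC := tri (peq_sym (peq_trans A1 A2)) A1.
End Tri3.

Section Il.
Variable n : nat.
Variables a b c d : 'I_n.
Hypotheses (hab : a < b) (hbc : b < c) (hcd : c < d).
Let C := peq_C hab hbc hcd.

Lemma il1 : peq [:: pg a c; pg b d; pgi a c]
  [:: pgi a b; pg b c; pg a b; pgi b c; pg b d; pg b c; pgi a b; pgi b c; pg a b].
Proof.
have [I1 _ _ _] := triB hab hbc.
have I1' : peq [:: pg a c; pgi b c; pgi a c] [:: pgi a b; pgi b c; pg a b] := peq_winv I1.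
ins 1 (pg b c). ins 4 (pg b c). ins 2 (pgi a c). rwat 3 4 C. rwat 0 3 I1. rwat 6 3 I1'. fin.
Qed.

Lemma il2 : peq [:: pgi a c; pg b d; pg a c]
  [:: pg b c; pg a b; pg b c; pgi a b; pgi b c; pgi b c; pg b d; pg b c;
      pg b c; pg a b; pgi b c; pgi a b; pgi b c].
Proof.
have [_ _ I3 _] := triB hab hbc.
have I3' : peq [:: pgi a c; pgi b c; pg a c] [:: pg b c; pg a b; pgi b c; pgi a b; pgi b c] := peq_winv I3.
have Ci : peq [:: pgi a c; pgi b c; pg b d; pg b c] [:: pgi b c; pg b d; pg b c; pgi a c].
  ins 4 (pg a c). rwat 1 4 (peq_sym C). cn 0. fin.
ins 1 (pg b c). ins 4 (pg b c). ins 2 (pg a c). rwat 3 4 Ci. rwat 0 3 I3. rwat 8 3 I3'. fin.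
Qed.

Lemma C1 : peq [:: pg b d; pg b c; pg a c; pgi b c; pgi b d] [:: pg b c; pg a c; pgi b c].
Proof. ins 0 (pg b c). rwat 1 4 (peq_sym C). cn 4. cn 3. fin. Qed.

Lemma il3 : peq [:: pg b d; pg a c; pgi b d]
  [:: pgi b c; pgi c d; pgi b c; pg c d; pg b c; pg b c; pg a c; pgi b c;
      pgi b c; pgi c d; pg b c; pg c d; pg b c].
Proof.
have [_ I2 _ _] := triB hbc hcd.
have I2' : peq [:: pg b d; pgi b c; pgi b d] [:: pgi b c; pgi c d; pgi b c; pg c d; pg b c] := peq_winv I2.
ins 1 (pgi b c). ins 4 (pgi b c). ins 2 (pgi b d). ins 7 (pgi b d). rwat 3 5 C1.
rwat 6 3 I2. rwat 0 3 I2'. fin.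
Qed.

Lemma il4 : peq [:: pgi b d; pg a c; pg b d]
  [:: pg c d; pgi b c; pgi c d; pg b c; pg a c; pgi b c; pg c d; pg b c; pgi c d].
Proof.
have [_ _ _ I4] := triB hbc hcd.
have I4' : peq [:: pgi b d; pgi b c; pg b d] [:: pg c d; pgi b c; pgi c d] := peq_winv I4.
have C2 : peq [:: pgi b d; pg b c; pg a c; pgi b c; pg b d] [:: pg b c; pg a c; pgi b c].
  rwat 1 3 (peq_sym C1). cn 0. cn 3. fin.
ins 1 (pgi b c). ins 4 (pgi b c). ins 2 (pg b d). ins 7 (pg b d). rwat 3 5 C2.
rwat 6 3 I4. rwat 0 3 I4'. fin.
Qed.
End Il.

Lemma comm_conj n (a1 b1 a2 b2 : 'I_n) :
  peq [:: pg a1 b1; pg a2 b2] [:: pg a2 b2; pg a1 b1] ->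
  peq [:: pg a1 b1; pg a2 b2; pgi a1 b1] [:: pg a2 b2] /\
  peq [:: pgi a1 b1; pg a2 b2; pg a1 b1] [:: pg a2 b2].
Proof.
move=> H; split.
- rwat 0 2 H. cn 1. fin.
- rwat 1 2 (peq_sym H). cn 0. fin.
Qed.
Definition Ql n (i j : 'I_n) (x : letter n) : bool :=
  (x.1.1 < x.1.2) && ~~((x.1.1 == i :> nat) && (x.1.2 == j :> nat)).

Ltac leaf H1 H2 := split; (eexists; split; last (exact H1 || exact H2)); rewrite /Ql /=; lia.

Lemma core n (i j a b : 'I_n) (hij : i < j) (hab : a < b)
  (hne : ~~((a == i :> nat) && (b == j :> nat))) :
  (exists w', all (Ql i j) w' /\ peq [:: pg i j; pg a b; pgi i j] w') /\
  (exists w', all (Ql i j) w' /\ peq [:: pgi i j; pg a b; pg i j] w').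
Proof.
case: (ltngtP b i) => [hbi|hib|/ord_inj ebi].
- have [H1 H2] := comm_conj (peq_sym (peq_B1 hab hbi hij)). leaf H1 H2.
case: (ltngtP j a) => [hja|haj|/ord_inj eaj].
- have [H1 H2] := comm_conj (peq_B1 hij hja hab). leaf H1 H2.
case: (ltngtP a i) => [hai|hia|/ord_inj eai].
- case: (ltngtP b j) => [hbj|hjb|/ord_inj ebj].
  + have H1 := il3 hai hib hbj. have H2 := il4 hai hib hbj. leaf H1 H2.
  + have [H1 H2] := comm_conj (peq_sym (peq_B2 hai hij hjb)). leaf H1 H2.
  + subst b. have [_ H1 _ H2] := triC hai hij. leaf H1 H2.
- case: (ltngtP b j) => [hbj|hjb|/ord_inj ebj].
  + have [H1 H2] := comm_conj (peq_B2 hia hab hbj). leaf H1 H2.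
  + have H1 := il1 hia haj hjb. have H2 := il2 hia haj hjb. leaf H1 H2.
  + subst b. have [H1 _ H2 _] := triB hia haj. leaf H1 H2.
- subst a. case: (ltngtP b j) => [hbj|hjb|/ord_inj ebj].
  + have [_ H1 _ H2] := triB hib hbj. leaf H1 H2.
  + have [H1 _ H2 _] := triA hij hjb. leaf H1 H2.
  + subst b. by rewrite !eqxx in hne.
- subst a. have [_ H1 _ H2] := triA hij hab. leaf H1 H2.
- subst b. have [H1 _ H2 _] := triC hab hij. leaf H1 H2.
Qed.
Lemma del2 n (s t : word n) z : peq (s ++ [:: z; linv z] ++ t) (s ++ t).
Proof. apply: peq_catl. apply: (@peq_catr _ t _ [::]). exact: peq_cancel. Qed.
Lemma del2' n (s t : word n) z : peq (s ++ [:: linv z; z] ++ t) (s ++ t).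
Proof. by have := del2 s t (linv z); rewrite linvK. Qed.
Lemma delw n (s t w : word n) : peq (s ++ winv w ++ w ++ t) (s ++ t).
Proof. apply: peq_catl. rewrite catA. apply: (@peq_catr _ t _ [::]). exact: cancw'. Qed.

Section G.
Variable n : nat.
Variables i j : 'I_n.
Hypothesis hij : i < j.
Implicit Types (u v w q : word n) (x y : letter n).

Definition G w := exists w', all (Ql i j) w' /\ peq w w'.

Lemma G_peq w v : peq w v -> G v -> G w.
Proof. move=> h [w' [h1 h2]]; exists w'; split=> //; exact: peq_trans h h2. Qed.
Lemma G_cat u v : G u -> G v -> G (u ++ v).
Proof.
move=> [u' [h1 h2]] [v' [h3 h4]]; exists (u' ++ v'); split; first by rewrite all_cat h1.
exact: peq_cat.
Qed.
Lemma G_nil : G [::].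
Proof. by exists [::]; split=> //; apply: peq_refl. Qed.
Lemma G_Q w : all (Ql i j) w -> G w.
Proof. by move=> h; exists w; split=> //; apply: peq_refl. Qed.
Lemma Ql_linv x : Ql i j (linv x) = Ql i j x.
Proof. by []. Qed.
Lemma G_winv w : G w -> G (winv w).
Proof.
move=> [w' [h1 h2]]; exists (winv w'); split; last exact: peq_winv.
by rewrite /winv all_rev all_map; apply: sub_all h1 => x.
Qed.

Lemma conjP x y : (x = pg i j \/ x = pgi i j) -> Ql i j y -> G [:: x; y; linv x].
Proof.
case: y => [[a b] e] hx /andP [/= hab hne].
have [[w1 [q1 e1]] [w2 [q2 e2]]] := core hij hab hne.
case: e.
- have h1 : G [:: pg i j; pg a b; pgi i j] by exists w1.
  have h2 : G [:: pgi i j; pg a b; pg i j] by exists w2.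
  case: hx => ->; [exact: (G_winv h1) | exact: (G_winv h2)].
- by case: hx => ->; [exists w1 | exists w2].
Qed.

Lemma conj_all x q : (forall y, Ql i j y -> G [:: x; y; linv x]) -> all (Ql i j) q ->
  G (x :: q ++ [:: linv x]).
Proof.
move=> H; elim: q => [|y q IH] /=.
  by move=> _; apply: (G_peq (peq_cancel x)); apply: G_nil.
case/andP=> hy hq.
apply: (@G_peq _ ([:: x; y; linv x] ++ x :: q ++ [:: linv x])).
  apply: peq_sym. have := del2' [:: x; y] (q ++ [:: linv x]) x. by [].
apply: G_cat; [exact: H | exact: IH].
Qed.

Lemma notQ x : x.1.1 < x.1.2 -> ~~ Ql i j x -> x = pg i j \/ x = pgi i j.
Proof.
case: x => [[a b] e] /= hab; rewrite /Ql /= hab /= negbK => /andP [/eqP /ord_inj -> /eqP /ord_inj ->].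
by case: e; [right | left].
Qed.

Lemma conjG x q : x.1.1 < x.1.2 -> G q -> G (x :: q ++ [:: linv x]).
Proof.
move=> hx [q' [h1 h2]].
apply: (@G_peq _ (x :: q' ++ [:: linv x])).
  exact: (peq_catl [:: x] (peq_catr _ h2)).
case hQ: (Ql i j x).
  by apply: G_Q; rewrite /= all_cat h1 /= hQ Ql_linv hQ.
apply: conj_all h1 => y hy. apply: conjP hy. apply: notQ hx _. by rewrite hQ.
Qed.
End G.
Section G2.
Variable n : nat.
Variables i j : 'I_n.
Hypothesis hij : i < j.
Implicit Types (u v w q : word n) (x y : letter n).
Local Notation G := (G i j).

Lemma L2 w q : valid_word w -> G q -> G (w ++ q ++ winv w).
Proof.
elim: w => [|x w IH] /=; first by rewrite cats0.
case/andP=> hx hw hq. rewrite winv_cons (catA q) (catA w).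
by apply: (conjG hij hx); apply: IH.
Qed.

Lemma Cl1 x y : valid_letter x -> valid_letter y -> G [:: x; y; linv x; linv y].
Proof.
move=> hx hy.
case hQy: (Ql i j y).
  apply: (G_cat (u := [:: x; y; linv x]) (v := [:: linv y])).
    apply: (conjG hij (q:=[:: y]) hx). by apply: G_Q; rewrite /= hQy.
  by apply: G_Q; rewrite /= Ql_linv hQy.
case hQx: (Ql i j x).
  apply: (G_cat (u := [:: x]) (v := [:: y; linv x; linv y])).
    by apply: G_Q; rewrite /= hQx.
  apply: (conjG hij (q:=[:: linv x]) hy). by apply: G_Q; rewrite /= Ql_linv hQx.
have [->|->] := notQ hx (negbT hQx); have [->|->] := notQ hy (negbT hQy);
  apply: (G_peq _ (G_nil i j)).
- cn 1. cn 0. fin.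
- cn 0. cn 0. fin.
- cn 0. cn 0. fin.
- cn 1. cn 0. fin.
Qed.

Lemma Cl2 x v : valid_letter x -> valid_word v -> G (commw ([:: x], v)).
Proof.
move=> hx; elim: v => [|y v IH] /=.
  by move=> _; apply: (G_peq (peq_cancel x)); apply: G_nil.
case/andP=> hy hv.
apply: (G_peq (v:=([:: x; y; linv x; linv y] ++ y :: commw ([:: x], v) ++ [:: linv y]))).
  rewrite /commw /= winv_cons.
  apply: peq_sym. 
  refine (peq_trans (v:=([:: x; y; linv x] ++ [:: linv y; y] ++ (x :: v ++ linv x :: winv v ++ [:: linv y]))) _ _).
    by rewrite /= -?catA /=; apply: peq_refl.
  apply: peq_trans (del2' [:: x; y; linv x] _ _) _.
  apply: (peq_trans (v:=([:: x; y] ++ [:: linv x; x] ++ (v ++ linv x :: winv v ++ [:: linv y])))).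
    by apply: peq_refl.
  apply: peq_trans (del2' [:: x; y] _ _) _.
  by rewrite /= -?catA /=; apply: peq_refl.
apply: G_cat; first exact: Cl1.
apply: conjG => //. exact: IH.
Qed.

Lemma Cl3 u v : valid_word u -> valid_word v -> G (commw (u, v)).
Proof.
move=> + hv; elim: u => [|x u IH] /=.
  by move=> _; apply: (G_peq (cancw v)); apply: G_nil.
case/andP=> hx hu.
apply: (G_peq (v:=((x :: commw (u, v) ++ [:: linv x]) ++ commw ([:: x], v)))).
  rewrite /commw /= winv_cons.
  apply: peq_sym.
  apply: (peq_trans (v:=((x :: u ++ v ++ winv u ++ winv v) ++ [:: linv x; x] ++ (v ++ [:: linv x] ++ winv v)))).
    by rewrite /= -?catA /=; apply: peq_refl.
  apply: peq_trans (del2' (x :: u ++ v ++ winv u ++ winv v) _ _) _.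
  apply: (peq_trans (v:=((x :: u ++ v ++ winv u) ++ winv v ++ v ++ ([:: linv x] ++ winv v)))).
    by rewrite /= -?catA /=; apply: peq_refl.
  apply: peq_trans (delw (x :: u ++ v ++ winv u) _ _) _.
  by rewrite /= -?catA /=; apply: peq_refl.
apply: G_cat; [apply: (conjG hij hx); exact: IH | exact: Cl2].
Qed.

Lemma G_comm w : inComm w -> G w.
Proof.
case=> s [hs hw]; apply: (G_peq (i:=i) (j:=j) hw).
elim: s hs {hw} => [|[u v] s IH] /=; first by move=> _; apply: G_nil.
by case/andP => /andP [hu hv] hs; apply: G_cat; [apply: Cl3 | apply: IH].
Qed.
End G2.
Lemma count_perm n (u v : word n) : perm_eq u v ->
  forall x, count_mem x u + count_mem (linv x) v = count_mem x v + count_mem (linv x) u.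
Proof. by move=> /permP h x; rewrite !h. Qed.

Lemma peq_count n (u v : word n) : peq u v ->
  forall x, count_mem x u + count_mem (linv x) v = count_mem x v + count_mem (linv x) u.
Proof.
elim=> {u v}.
- by move=> w x; rewrite addnC.
- by move=> u v _ IH x; have := IH x; lia.
- by move=> u v w _ IH1 _ IH2 x; have := IH1 x; have := IH2 x; lia.
- by move=> u1 u2 v1 v2 _ IH1 _ IH2 x; have := IH1 x; have := IH2 x; rewrite !count_cat; lia.
- move=> y x /=. rewrite (inj_eq (can_inj (@linvK n))) (can2_eq (@linvK n) (@linvK n)).
  rewrite !addn0 addnC. by [].
- by move=> a b c _ _; apply: count_perm; exact/permPl/(perm_catC [:: pg a b] [:: pg a c; pg b c]).
- by move=> a b c _ _; apply: count_perm; exact/permPl/(perm_catC [:: pg a c] [:: pg b c; pg a b]).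
- by move=> a b c d _ _ _; apply: count_perm; exact/permPl/(perm_catC [:: pg a b] [:: pg c d]).
- by move=> a b c d _ _ _; apply: count_perm; exact/permPl/(perm_catC [:: pg a d] [:: pg b c]).
- by move=> a b c d _ _ _; apply: count_perm; exact/permPl/(perm_catC [:: pg a c] [:: pgi b c; pg b d; pg b c]).
Qed.

Definition Zw n (w : word n) := forall x, count_mem x w = count_mem (linv x) w.

Lemma Zcomm n (w : word n) : valid_word w -> Zw w -> inComm w.
Proof.
move: {2}(size w) (leqnn (size w)) => m; elim: m w => [|m IH] [|x w] //=.
- move=> _ _ _; exists [::]; split=> //; apply: peq_refl.
- move=> _ _ _; exists [::]; split=> //; apply: peq_refl.
move=> hs /andP [hx hw] hZ.
have hin : linv x \in w.
  have := hZ x; rewrite /= eqxx.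
  have -> : (x == linv x) = false.
    by case: x {hx hZ} => [[a b] []]; rewrite /linv /= xpair_eqE /= andbF.
  rewrite -has_pred1 has_count => /= h; lia.
case/splitPr: hin hw hs hZ => u v.
rewrite /valid_word all_cat /= => /and3P [hu _ hv] hs hZ.
have [|||s [hs1 hs2]] := IH (u ++ v).
- by rewrite size_cat /= in hs *; rewrite size_cat; lia.
- by rewrite /valid_word all_cat hu hv.
- move=> y; have := hZ y; rewrite /= !count_cat /=.
  rewrite (inj_eq (can_inj (@linvK n))) (can2_eq (@linvK n) (@linvK n)).
  lia.
exists (([:: x], u) :: s); split; first by rewrite /= /valid_word /= hx hu hs1.
rewrite (_ : flatten _ = [:: x] ++ u ++ [:: linv x] ++ winv u ++ flatten (map (@commw n) s)); last by rewrite /= /commw -!catA.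
apply: (peq_catl [:: x]). apply: peq_catl. apply: (peq_catl [:: linv x]).
apply: (peq_trans _ (peq_catl (winv u) hs2)).
apply: peq_sym. exact: (delw [::] v u).
Qed.
Lemma dec_Z n (w : word n) : valid_word w -> decomposable (n - 2) w -> Zw w.
Proof.
move=> hw hd [[a b] f]; set x := (a, b, f).
case hx: (x.1.1 < x.1.2).
- set S := ~: [set x.1.1; x.1.2].
  have hne : x.1.1 != x.1.2 by apply/eqP => ee; rewrite ee ltnn in hx.
  have cS : #|S| = n - 2 by rewrite cardsCs setCK cards2 card_ord hne.
  have [w' [hall hpeq]] := hd S cS.
  have h0 : forall y : letter n, y.1 = x.1 -> count_mem y w' = 0.
    move=> y hy; apply/count_memPn; apply/negP => hin.
    have := allP hall _ hin; rewrite /S !in_setC !in_set2 hy !eqxx /=.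
    by rewrite orbT /= andbF.
  have := peq_count hpeq x. rewrite (h0 x (erefl _)) (h0 (linv x) (erefl _)). lia.
- have hz : forall y : letter n, y.1 = x.1 -> count_mem y w = 0.
    move=> y hy; apply/count_memPn; apply/negP => hin.
    by have := allP hw _ hin; rewrite /valid_letter hy hx.
  by rewrite (hz x (erefl _)) (hz (linv x) (erefl _)).
Qed.

Lemma Ql_S n (i j : 'I_n) (y : letter n) : i < j -> Ql i j y ->
  valid_letter y && ((y.1.1 \in ~: [set i; j]) || (y.1.2 \in ~: [set i; j])).
Proof.
case: y => [[c d] e] hij; rewrite /Ql /valid_letter /= !in_setC !in_set2 -!val_eqE /=.
move=> /andP [hcd hne]; rewrite hcd /=. lia.
Qed.

Theorem corollary2p4 (n : nat) (hn : 2 <= n) (w : word n) (hw : valid_word w) :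
  decomposable (n - 2) w <-> inComm w.
Proof.
split.
- move=> hd; exact: Zcomm hw (dec_Z hw hd).
- move=> hc S hS.
  have hC : #|~: S| == 2 by have := cardsC S; rewrite card_ord hS => h; apply/eqP; lia.
  have [a [b [hab eS]]] := cards2P _ hC.
  have [i [j [hij ->]]] : exists i j : 'I_n, i < j /\ S = ~: [set i; j].
    case: (ltngtP a b) => h.
    + by exists a, b; rewrite -eS setCK.
    + by exists b, a; rewrite setUC -eS setCK.
    + by rewrite (ord_inj h) eqxx in hab.
  have [w' [h1 h2]] := G_comm hij hc.
  exists w'; split => //. apply: sub_all h1 => y. exact: Ql_S.
Qed.
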